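(* Let $m\ge1$ be an integer. For real $H>1$ let $\mathcal P_m(H)$ be the set of monic self-reciprocal polynomials $P\in\mathbb Z[t]$ of degree $2(m+1)$ having $2m$ roots on the complex unit circle and two positive real roots $\alpha,\alpha^{-1}$ with $1<\alpha\le H$, and let $\mathcal P^R_m(H)$ be the set of reducible (over $\mathbb Q$) polynomials in $\mathcal P_m(H)$. Then there is $C_2>0$ depending only on $m$ such that \[ \#\mathcal P^R_m(H)\le C_2\,H^{m}\quad\text{for all } H>1 . \]
   Context: A polynomial $P$ of degree $n$ is self-reciprocal if $P(t)=t^nP(t^{-1})$. *)

(* Defs.v *)
From HB Require Import structures.
From mathcomp Require Import all_boot all_order all_algebra.
From mathcomp Require Import complex.
From mathcomp Require Import reals.
Set Implicit Arguments. Unset Strict Implicit. Unset Printing Implicit Defensive.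
Import Order.TTheory GRing.Theory Num.Theory.
Local Open Scope ring_scope.
Local Open Scope complex_scope.

Definition polyC_of (R : realType) (P : {poly int}) : {poly R[i]} :=
  map_poly (fun z : int => z%:~R) P.

Definition self_reciprocal (R : realType) (P : {poly int}) : Prop :=
  forall t : R[i], t != 0 ->
    (polyC_of R P).[t] = t ^+ (size P).-1 * (polyC_of R P).[t^-1].

Definition in_Pm (R : realType) (m : nat) (H : R) (P : {poly int}) : Prop :=
  [/\ P \is monic,
      (size P).-1 = (2 * (m + 1))%N,
      self_reciprocal R P &
      exists (s : seq R[i]) (alpha : R),
        [/\ polyC_of R P = \prod_(z <- s) ('X - z%:P),
            count (fun z : R[i] => `|z| == 1) s = (2 * m)%N,
            alpha%:C \in s, (alpha^-1)%:C \in s &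
            1 < alpha <= H]].

Definition in_PRm (R : realType) (m : nat) (H : R) (P : {poly int}) : Prop :=
  in_Pm m H P /\ ~ irreducible_poly (map_poly (fun z : int => z%:~R) P : {poly rat}).

(* Main.v *)
Require Import Defs.
From HB Require Import structures.
From mathcomp Require Import all_boot all_order all_algebra.
From mathcomp Require Import complex.
From mathcomp Require Import reals.
From mathcomp Require Import zify ring lra.
From mathcomp Require boolp.
Import Order.TTheory GRing.Theory Num.Theory.
Set Implicit Arguments. Unset Strict Implicit. Unset Printing Implicit Defensive.
Local Open Scope ring_scope.

Section Gen.
Variable F : fieldType.
Definition pr (l : seq F) : {poly F} := \prod_(z <- l) ('X - z%:P).

Lemma pr_cons z l : pr (z :: l) = ('X - z%:P) * pr l.
Proof. by rewrite /pr big_cons. Qed.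

Lemma pr_perm l1 l2 : perm_eq l1 l2 -> pr l1 = pr l2.
Proof. by move=> h; rewrite /pr (perm_big _ h). Qed.

Lemma pr_uniq l1 l2 : pr l1 = pr l2 -> perm_eq l1 l2.
Proof.
elim: l1 l2 => [|z l1 IH] l2.
  rewrite /pr big_nil => h.
  have : size (pr l2) = 1%N by rewrite /pr -h size_poly1.
  by rewrite size_prod_XsubC; case: l2 {h}.
move=> h.
have zin : z \in l2.
  have : root (pr l2) z by rewrite -h pr_cons rootM root_XsubC eqxx.
  by rewrite root_prod_XsubC.
have hp := perm_to_rem zin.
rewrite pr_cons (pr_perm hp) pr_cons in h.
have /IH h2 := mulfI (negbT (polyXsubC_eq0 z)) h.
apply: (@perm_trans _ (z :: rem z l2)); [by rewrite perm_cons | by rewrite perm_sym].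
Qed.

Lemma split_roots s : forall A B : {poly F}, A \is monic -> B \is monic ->
  A * B = pr s -> exists tA tB, [/\ perm_eq (tA ++ tB) s, A = pr tA & B = pr tB].
Proof.
elim: s => [|z s IH] A B mA mB.
  rewrite /pr big_nil => h.
  have : size (A * B) = 1%N by rewrite h size_poly1.
  rewrite size_Mmonic ?monic_neq0 //.
  have := size_poly_gt0 A; have := size_poly_gt0 B.
  rewrite !monic_neq0 // => sB sA hs.
  have sA1 : size A = 1%N by lia.
  have sB1 : size B = 1%N by lia.
  exists [::], [::]; split => //; rewrite /pr big_nil.
    by rewrite [A]size1_polyC ?sA1 //; congr _%:P; rewrite -(eqP mA) lead_coefE sA1.
  by rewrite [B]size1_polyC ?sB1 //; congr _%:P; rewrite -(eqP mB) lead_coefE sB1.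
rewrite pr_cons => h.
have : root (A * B) z by rewrite h rootM root_XsubC eqxx.
rewrite rootM => /orP [rA | rB].
  have dA : 'X - z%:P %| A by rewrite dvdp_XsubCl.
  have eA := divpK dA.
  set A' := A %/ ('X - z%:P) in eA.
  have mA' : A' \is monic by rewrite -(monicMr _ (monicXsubC z)) eA.
  have h' : A' * B = pr s.
    apply: (mulfI (negbT (polyXsubC_eq0 z))).
    by rewrite -h -eA; ring.
  have [tA [tB [p1 e1 e2]]] := IH _ _ mA' mB h'.
  exists (z :: tA), tB; split => //.
    by rewrite cat_cons perm_cons.
  by rewrite pr_cons -e1 -eA mulrC.
have dB : 'X - z%:P %| B by rewrite dvdp_XsubCl.
have eB := divpK dB.
set B' := B %/ ('X - z%:P) in eB.
have mB' : B' \is monic by rewrite -(monicMr _ (monicXsubC z)) eB.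
have h' : A * B' = pr s.
  apply: (mulfI (negbT (polyXsubC_eq0 z))).
  by rewrite -h -eB; ring.
have [tA [tB [p1 e1 e2]]] := IH _ _ mA mB' h'.
exists tA, (z :: tB); split => //.
  apply: (@perm_trans _ (z :: tA ++ tB)); [by rewrite -cat1s perm_catCA | by rewrite perm_cons].
by rewrite pr_cons -e2 -eB mulrC.
Qed.

Lemma pr_rev l t : (forall z, z \in l -> z != 0) -> t != 0 ->
  t ^+ size l * (pr l).[t^-1] =
  (\prod_(z <- l) (- z)) * (pr (map GRing.inv l)).[t].
Proof.
move=> hz ht; elim: l hz => [|z l IH] hz.
  by rewrite /pr /= !big_nil !hornerC expr0 !mul1r.
have z0 : z != 0 by apply: hz; rewrite inE eqxx.
rewrite /= pr_cons pr_cons big_cons !hornerM !hornerXsubC exprS.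
rewrite mulrACA IH; last by move=> y yl; apply: hz; rewrite inE yl orbT.
have -> : t * (t^-1 - z) = - z * (t - z^-1).
  rewrite mulrBr (mulfV ht) mulrBr !mulNr (mulfV z0); ring.
by rewrite -!mulrA; congr (_ * _); rewrite mulrCA.
Qed.

End Gen.

Section Num.
Variable F : numFieldType.

Lemma ident (p : {poly F}) : (forall t, t != 0 -> p.[t] = 0) -> p = 0.
Proof.
move=> h; apply/eqP; apply: contraT => p0.
pose rs := [seq (i.+1)%:R : F | i <- iota 0 (size p)].
have := max_poly_roots p0 _ _ (rs := rs).
rewrite size_map size_iota ltnn; apply.
  apply/allP => x /mapP [i _ ->]; apply/rootP; apply: h.
  by rewrite pnatr_eq0.
rewrite map_inj_uniq ?iota_uniq // => i j /eqP; rewrite eqr_nat => /eqP [].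
done.
Qed.

Lemma rev_coef (p : {poly F}) d c : (size p <= d.+1)%N ->
  (forall t, t != 0 -> t ^+ d * p.[t^-1] = c * p.[t]) ->
  forall i, (i <= d)%N -> p`_(d - i) = c * p`_i.
Proof.
move=> sp h.
pose r := \poly_(i < d.+1) p`_(d - i) - c *: p.
have r0 : r = 0.
  apply: ident => t t0.
  rewrite /r hornerD hornerN hornerZ horner_poly -h //.
  apply/eqP; rewrite subr_eq0; apply/eqP.
  rewrite (horner_coef_wide _ sp) mulr_sumr.
  rewrite (reindex_inj rev_ord_inj) /=; apply: eq_bigr => i _.
  have hi : (i <= d)%N by rewrite -ltnS.
  rewrite subSS subKn // (exprB hi) ?unitfE // exprVn; ring.
move=> i hi.
have /polyP/(_ i) := r0.
rewrite /r coefB coef_poly ltnS hi coefZ coef0 => /eqP.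
by rewrite subr_eq0 => /eqP.
Qed.

Lemma pr_coef_bound (l : seq F) j : `|(pr l)`_j| <= \prod_(z <- l) (1 + `|z|).
Proof.
elim: l j => [|z l IH] j.
  rewrite /pr !big_nil coef1; case: (j == 0%N) => /=; rewrite ?normr1 ?normr0 //.
have M0 : 0 <= \prod_(z <- l) (1 + `|z|).
  by apply: prodr_ge0 => y _; rewrite addr_ge0.
rewrite pr_cons big_cons mulrBl coefB coefXM coefCM.
apply: le_trans (ler_normB _ _) _.
rewrite normrM mulrDl mul1r lerD //.
  by case: (j == 0%N); rewrite ?normr0.
by apply: ler_wpM2l => //.
Qed.

End Num.

Lemma count_codes (A : eqType) (T : finType) (Rel : A -> T -> Prop) (s : seq A) :
  uniq s -> (forall a, a \in s -> exists c, Rel a c) ->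
  (forall a b c, Rel a c -> Rel b c -> a = b) -> (size s <= #|T|)%N.
Proof.
move=> us hex hinj.
case: s us hex => [|a0 s'] // us hex.
have [c0 _] := hex a0 (mem_head _ _).
have hall : forall a, exists c, a \in a0 :: s' -> Rel a c.
  move=> a; case: (boolP (a \in a0 :: s')) => ha.
    by have [c hc] := hex a ha; exists c.
  by exists c0.
have [f hf] := boolp.choice hall.
rewrite -(size_map f) cardE; apply: uniq_leq_size.
  rewrite map_inj_in_uniq // => x y hx hy e.
  apply: (hinj x y (f x)); first exact: hf.
  by rewrite e; apply: hf.
by move=> x _; rewrite mem_enum.
Qed.

Definition enc (B : nat) (x : int) : 'I_(2 * B).+1 := inord (absz (x + B%:Z)).

Lemma enc_inj B x y : (`|x| <= B%:Z)%R -> (`|y| <= B%:Z)%R -> enc B x = enc B y -> x = y.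
Proof.
move=> hx hy /(congr1 val) /=; rewrite /enc !inordK; first lia.
all: lia.
Qed.

Section Cnt.
Variable R : realType.

Definition Props (m : nat) (H : R) (P Q G : {poly int}) : Prop :=
  [/\ P = Q * G, (size G <= (2 * m + 2))%N, (size Q <= (2 * m + 2))%N,
      (forall j, `|G`_j| <= (2 ^ (2 * m + 2))%N%:Z) &
      [/\ (forall i, (i <= (size Q).-1)%N -> Q`_((size Q).-1 - i) = Q`_0 * Q`_i),
      (Q`_0 = 1 \/ Q`_0 = -1) &
      (forall j, (`|Q`_j|%:~R : R) <= 4 ^+ (m + 1) * H)]].

Lemma Props_inj m H P1 P2 Q1 G1 Q2 G2 (N : nat) :
  N = Num.Def.trunc (4 ^+ (m + 1) * H) -> 0 <= H ->
  Props m H P1 Q1 G1 -> Props m H P2 Q2 G2 ->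
  (forall i : 'I_(2 * m + 2), enc (2 ^ (2 * m + 2)) G1`_i = enc (2 ^ (2 * m + 2)) G2`_i) ->
  (forall i : 'I_m, enc N Q1`_i.+1 = enc N Q2`_i.+1) ->
  (Q1`_0 == 1) = (Q2`_0 == 1) ->
  (inord (size Q1) : 'I_(2 * m + 2).+1) = inord (size Q2) ->
  P1 = P2.
Proof.
move=> hN H0 [e1 sG1 sQ1 bG1 [r1 z1 bQ1]] [e2 sG2 sQ2 bG2 [r2 z2 bQ2]] eG eQ e0 eS.
have eG' : G1 = G2.
  apply/polyP => j.
  case: (ltnP j (2 * m + 2)) => hj.
    by apply: (enc_inj (bG1 j) (bG2 j)); apply: (eG (Ordinal hj)).
  by rewrite !nth_default //; apply: leq_trans hj.
have eS' : size Q1 = size Q2.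
  by move: (congr1 val eS) => /=; rewrite !inordK // ltnS.
have bN : forall Q : {poly int}, (forall j, (`|Q`_j|%:~R : R) <= 4 ^+ (m + 1) * H) ->
    forall j, `|Q`_j| <= N%:Z.
  move=> Q hQ j.
  have hX : (0 : R) <= 4 ^+ (m + 1) * H by rewrite mulr_ge0 // exprn_ge0.
  have : (absz (Q`_j)%R <= Num.Def.trunc (4 ^+ (m + 1) * H))%N.
    rewrite truncn_ge_nat //; apply: le_trans (hQ j); by rewrite -abszE.
  move=> h; rewrite hN.
  by rewrite -abszE lez_nat.
have eQ0 : Q1`_0 = Q2`_0.
  by case: z1 z2 e0 => -> [] -> //.
have eQ' : Q1 = Q2.
  apply/polyP => j.
  have low : forall j, (j <= m)%N -> Q1`_j = Q2`_j.
    move=> [|k] hk //.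
    by apply: (enc_inj (bN _ bQ1 _) (bN _ bQ2 _)); apply: (eQ (Ordinal hk)).
  case: (leqP j m) => hjm; first exact: low.
  case: (leqP j (size Q1).-1) => hjd.
    have h1 := r1 _ (leq_subr j (size Q1).-1).
    have h2 := r2 _ (leq_subr j (size Q2).-1).
    rewrite subKn // in h1; rewrite -eS' subKn // in h2.
    rewrite h1 h2 eQ0 eS' low //.
    rewrite -eS'; lia.
  rewrite !nth_default //; rewrite -?eS'; move: hjd; case: (size Q1) => //= n; idtac.
by rewrite e1 e2 eG' eQ'.
Qed.

Lemma count_thm m : exists C2 : R, 0 < C2 /\
  forall H : R, 1 < H -> forall s : seq {poly int}, uniq s ->
    (forall P, P \in s -> exists Q G, Props m H P Q G) ->
    (size s)%:R <= C2 * H ^+ m.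
Proof.
pose K := (2 ^ (2 * m + 2))%N.
pose C2 : R := ((2 * K).+1 ^ (2 * m + 2) * (2 * (2 * m + 2).+1))%:R * (3 * 4 ^+ (m + 1)) ^+ m.
exists C2; split.
  by rewrite /C2 mulr_gt0 ?ltr0n ?muln_gt0 ?expn_gt0 //= exprn_gt0 // mulr_gt0 // exprn_gt0.
move=> H H1 s us hs.
have H0 : 0 <= H by lra.
pose N := Num.Def.trunc (4 ^+ (m + 1) * H).
pose T := ({ffun 'I_(2 * m + 2) -> 'I_(2 * K).+1} *
          ({ffun 'I_m -> 'I_(2 * N).+1} * (bool * 'I_(2 * m + 2).+1)))%type.
pose code (Q G : {poly int}) : T :=
  ([ffun i : 'I_(2 * m + 2) => enc K G`_i],
   ([ffun i : 'I_m => enc N Q`_i.+1], (Q`_0 == 1, inord (size Q)))).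
have hle : (size s <= #|{: T}|)%N.
  apply: (@count_codes _ _ (fun P c => exists Q G, Props m H P Q G /\ c = code Q G)) => //.
    move=> P /hs [Q [G hP]]; exists (code Q G); exists Q, G; split => //.
  move=> P1 P2 c [Q1 [G1 [h1 ->]]] [Q2 [G2 [h2 e]]].
  move: e; rewrite /code => -[/ffunP eG /ffunP eQ e0 eS].
  apply: (Props_inj (N := N) _ H0 h1 h2) => //.
    by move=> i; move: (eG i); rewrite !ffunE.
  by move=> i; move: (eQ i); rewrite !ffunE.
have cT : #|{: T}| = ((2 * K).+1 ^ (2 * m + 2) * ((2 * N).+1 ^ m * (2 * (2 * m + 2).+1)))%N.
  by rewrite !card_prod !card_ffun !card_ord card_bool.
apply: le_trans (_ : (#|{: T}|%:R : R) <= _); first by rewrite ler_nat.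
rewrite cT mulnCA natrM /C2 natrM natrX -!mulrA.
rewrite mulrC -mulrA ler_wpM2l // ler_wpM2l // -exprMn.
have h4 : (1 : R) <= 4 ^+ (m + 1) by rewrite exprn_ege1 // ler1n.
have hN1 : (N%:R : R) <= 4 ^+ (m + 1) * H.
  by rewrite truncn_le mulr_ge0 // exprn_ge0.
apply: lerXn2r; rewrite ?nnegrE //.
  by rewrite mulr_ge0 // mulr_ge0 // exprn_ge0.
rewrite -addn1 natrD natrM.
nra.
Qed.

End Cnt.

Local Open Scope complex_scope.

Section Core.
Variable R : realType.
Local Notation C := (R[i]).

Lemma pc_coef (Q : {poly int}) j : (polyC_of R Q)`_j = (Q`_j)%:~R.
Proof. by rewrite /polyC_of coef_map. Qed.
Lemma pc_size (Q : {poly int}) : size (polyC_of R Q) = size Q.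
Proof. rewrite /polyC_of size_map_inj_poly //. exact: intr_inj. Qed.
Lemma pc_mul (P Q : {poly int}) : polyC_of R (P * Q) = polyC_of R P * polyC_of R Q.
Proof. by rewrite /polyC_of rmorphM. Qed.
Lemma pc_monic (Q : {poly int}) : Q \is monic -> polyC_of R Q \is monic.
Proof.
move=> mQ; rewrite monicE lead_coefE pc_size pc_coef -lead_coefE (eqP mQ) //.
Qed.
Lemma int_pm1 (x : int) : `|x| = 1 -> x = 1 \/ x = -1.
Proof. lia. Qed.
Lemma int_abs1 (x y : int) : `|x| * `|y| = 1 -> `|x| = 1.
Proof. rewrite -!abszE -PoszM => -[] /eqP; rewrite muln_eq1 => /andP[/eqP -> _] //. Qed.
Lemma conj_pr (l : seq C) : map_poly conjc (pr l) = pr (map conjc l).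
Proof. by rewrite /pr rmorph_prod big_map; apply: eq_bigr => z _; rewrite /= map_polyXsubC. Qed.
Lemma prod_const (l : seq C) (F : C -> C) c :
  (forall z, z \in l -> F z = c) -> \prod_(z <- l) F z = c ^+ size l.
Proof.
elim: l => [|z l IH] h; first by rewrite big_nil.
rewrite big_cons IH ?h ?inE ?eqxx // ?exprS // => y yl.
by apply: h; rewrite inE yl orbT.
Qed.
Lemma pr_at0 (l : seq C) : `|(pr l).[0]| = \prod_(z <- l) `|z|.
Proof.
rewrite /pr horner_prod normr_prod; apply: eq_bigr => z _.
by rewrite hornerXsubC sub0r normrN.
Qed.
Lemma pr_at0' (l : seq C) : (pr l).[0] = \prod_(z <- l) (- z).
Proof.
by rewrite /pr horner_prod; apply: eq_bigr => z _; rewrite hornerXsubC sub0r.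
Qed.
Lemma all_unit (l : seq C) : count (predC (fun z : C => `|z| == 1)) l = 0%N ->
  forall z, z \in l -> `|z| = 1.
Proof.
move=> h z zl; apply/eqP/negPn/negP => nz.
have : has (predC (fun z : C => `|z| == 1)) l by apply/hasP; exists z.
by rewrite has_count h.
Qed.
Lemma ar_a (x y : nat) : (x.+1 + y = 2 -> 0 < y -> x = 0)%N. Proof. lia. Qed.
Lemma ar_b (x y : nat) : (x.+2 + y = 2 -> x = 0 /\ y = 0)%N. Proof. lia. Qed.
Lemma ar_c (a b m : nat) : (a + b = 2 * m + 4 -> 1 < a -> 1 < b -> a <= 2 * m + 2 /\ b <= 2 * m + 2)%N.
Proof. lia. Qed.
Lemma ar_d (nA nu m : nat) : (nu.+2 = nA.-1 -> nA <= 2 * m + 2 -> nu <= 2 * m)%N. Proof. lia. Qed.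
Lemma perm2 (x y : C) l1 l2 : perm_eq l1 l2 -> perm_eq [:: x, y & l1] [:: y, x & l2].
Proof.
move=> h; apply: (@perm_trans _ [:: y, x & l1]); last by rewrite !perm_cons.
by rewrite -[[:: x, y & l1]]/([:: x] ++ [:: y] ++ l1) perm_catCA.
Qed.
Lemma normC_real (x : R) : 0 <= x -> `|x%:C| = x%:C.
Proof. by move=> x0; rewrite ger0_norm // ler0c. Qed.
Lemma eqC1 (x : R) : (x%:C == 1) = (x == 1).
Proof. by rewrite -(rmorph1 (real_complex R)) (inj_eq (@complexI R)). Qed.


Lemma core m H (P A B : {poly int}) (s tA tB : seq C) (alpha : R) :
  P = A * B -> A \is monic -> B \is monic -> (1 < size A)%N -> (1 < size B)%N ->
  size P = (2 * m + 3)%N ->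
  polyC_of R A = pr tA -> polyC_of R B = pr tB -> perm_eq (tA ++ tB) s ->
  count (fun z : C => `|z| == 1) s = (2 * m)%N ->
  alpha%:C \in tA -> (alpha^-1)%:C \in s -> 1 < alpha -> alpha <= H ->
  Props m H P A B.
Proof.
move=> eP mA mB sA sB sP eA eB ps cnt ain bin ha haH.
set a := alpha%:C; set b := (alpha^-1)%:C.
set u1 := (fun z : C => `|z| == 1).
have A0 : A != 0 by apply: monic_neq0.
have B0 : B != 0 by apply: monic_neq0.
have sAB : (size A + size B = 2 * m + 4)%N.
  move: sP; rewrite eP size_mul //; set nA := size A; set nB := size B; lia.
have stA : size tA = (size A).-1.
  by move: (pc_size A); rewrite eA /pr size_prod_XsubC => <-.
have stB : size tB = (size B).-1.
  by move: (pc_size B); rewrite eB /pr size_prod_XsubC => <-.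
have ss : size s = (2 * m + 2)%N.
  rewrite -(perm_size ps) size_cat stA stB; move: sAB sA sB; set nA := size A; set nB := size B; lia.
have cnt2 : count (predC u1) s = 2%N.
  by have := count_predC u1 s; rewrite cnt ss; lia.
have al0 : 0 < alpha by lra.
have ai1 : alpha^-1 < 1 by rewrite invf_lt1.
have ai0 : 0 < alpha^-1 by rewrite invr_gt0.
have na : `|a| = a by rewrite normC_real // ltW.
have nb : `|b| = b by rewrite normC_real // ltW.
have nua : predC u1 a by rewrite /= /u1 na eqC1 gt_eqF.
have nub : predC u1 b by rewrite /= /u1 nb eqC1 lt_eqF.
have ab : a != b.
  by rewrite (inj_eq (@complexI R)) gt_eqF // (lt_trans ai1 ha).
have ab1 : a * b = 1 by rewrite -rmorphM /= mulfV ?gt_eqF // rmorph1.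
have ains : a \in s by rewrite -(perm_mem ps) mem_cat ain.
have ps1 := perm_to_rem ains.
have binr : b \in rem a s.
  by move: bin; rewrite (perm_mem ps1) inE eq_sym (negbTE ab).
have ps2 := perm_to_rem binr.
set s2 := rem b (rem a s) in ps2.
have pss : perm_eq s [:: a, b & s2].
  by apply: (perm_trans ps1); rewrite perm_cons.
have cs2 : count (predC u1) s2 = 0%N.
  move: cnt2; rewrite (permP pss) /= (negbTE (nua : ~~ u1 a)) (negbTE (nub : ~~ u1 b)) /= !add1n; by case.
have us2 := all_unit cs2.
have prod_s : \prod_(z <- s) `|z| = 1.
  rewrite (perm_big _ pss) !big_cons /= na nb mulrA ab1 mul1r.
  by rewrite big_seq big1 // => z /us2.
have nAB : `|(polyC_of R A).[0]| * `|(polyC_of R B).[0]| = 1.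
  by rewrite eA eB !pr_at0 -big_cat (perm_big _ ps).
have hA0 : `|A`_0| = 1 /\ `|B`_0| = 1.
  move: nAB; rewrite !horner_coef0 !pc_coef -!intr_norm -intrM => h.
  have h' : `|A`_0| * `|B`_0| = 1 by apply: (@intr_inj C); rewrite h.
  split; first exact: (int_abs1 h').
  by rewrite mulrC in h'; exact: (int_abs1 h').
have nA1 : \prod_(z <- tA) `|z| = 1.
  by rewrite -pr_at0 -eA horner_coef0 pc_coef -intr_norm hA0.1.
have ctot : (count (predC u1) tA + count (predC u1) tB = 2)%N.
  by rewrite -count_cat (permP ps).
have pA := perm_to_rem ain.
have bA : b \in tA.
  apply/negPn/negP => nbA.
  have bB : b \in tB by move: bin; rewrite -(perm_mem ps) mem_cat (negbTE nbA).
  have cB : (0 < count (predC u1) tB)%N by rewrite -has_count; apply/hasP; exists b.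
  have cr : count (predC u1) (rem a tA) = 0%N.
    move: ctot cB; rewrite (permP pA) /= (negbTE (nua : ~~ u1 a)) /= add1n.
    exact: ar_a.
  move: nA1; rewrite (perm_big _ pA) big_cons /= na big_seq big1 ?mulr1.
    by move/eqP; rewrite eqC1 gt_eqF.
  by move=> z /(all_unit cr) ->.
have bAr : b \in rem a tA.
  by move: bA; rewrite (perm_mem pA) inE eq_sym (negbTE ab).
have pA2 := perm_to_rem bAr.
set u := rem b (rem a tA) in pA2.
have ptA : perm_eq tA [:: a, b & u].
  by apply: (perm_trans pA); rewrite perm_cons.
have cu : count (predC u1) u = 0%N /\ count (predC u1) tB = 0%N.
  move: ctot; rewrite (permP ptA) /= (negbTE (nua : ~~ u1 a)) (negbTE (nub : ~~ u1 b)) /= !add1n.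
  exact: ar_b.
have uu := all_unit cu.1.
have uB := all_unit cu.2.
have [szA szB] := ar_c sAB sA sB.
have su : (size u <= 2 * m)%N.
  have := perm_size ptA; rewrite /= stA => e.
  exact: ar_d (esym e) szA.
have bndB : forall j, `|B`_j| <= (2 ^ (2 * m + 2))%N%:Z.
  move=> j; have h := pr_coef_bound tB j.
  rewrite (@prod_const tB (fun z => 1 + `|z|) 2) in h; last by move=> z /uB ->.
  rewrite -eB pc_coef -intr_norm in h.
  rewrite -(ler_int C); apply: (le_trans h).
  change ((2 : C) ^+ size tB <= (2 ^ (2 * m + 2))%N%:R).
  rewrite natrX ler_eXn2l ?ltr1n // stB.
  exact: leq_trans (leq_pred _) szB.
have bndA : forall j, (`|A`_j|%:~R : R) <= 4 ^+ (m + 1) * H.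
  move=> j; have h := pr_coef_bound tA j.
  rewrite (perm_big _ ptA) !big_cons /= na nb in h.
  rewrite (@prod_const u (fun z => 1 + `|z|) 2) in h; last by move=> z /uu ->.
  rewrite -eA pc_coef -intr_norm in h.
  rewrite -lecR rmorph_int; apply: (le_trans h).
  have -> : (1 + a) * ((1 + b) * 2 ^+ size u) =
            ((1 + alpha) * ((1 + alpha^-1) * 2 ^+ size u))%:C.
    by rewrite !rmorphM !rmorphD rmorph1 rmorphXn /= rmorph_nat.
  rewrite lecR.
  have t0 : (0 : R) <= 2 ^+ size u by rewrite exprn_ge0.
  have tq : (2 : R) ^+ size u <= 4 ^+ m.
    have -> : (4 : R) ^+ m = 2 ^+ (2 * m) by rewrite exprM; congr (_ ^+ _); rewrite expr2 -natrM.
    by rewrite ler_eXn2l ?ltr1n.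
  have aa : alpha * alpha^-1 = 1 by rewrite mulfV ?gt_eqF.
  have e1 : (1 + alpha) * (1 + alpha^-1) <= 4 * H by nra.
  rewrite mulrA addn1 exprS.
  have q0 : (0 : R) <= 4 ^+ m by rewrite exprn_ge0.
  have H0 : 0 <= H by lra.
  have k1 : 0 <= (4 * H - (1 + alpha) * (1 + alpha^-1)) * 2 ^+ size u by rewrite mulr_ge0 // subr_ge0.
  have k2 : 0 <= (4 * H) * (4 ^+ m - 2 ^+ size u) by rewrite mulr_ge0 ?mulr_ge0 // subr_ge0.
  nra.
have cA : pr (map conjc tA) = pr tA.
  rewrite -conj_pr -eA; apply/polyP => j.
  by rewrite coef_map /= pc_coef rmorph_int.
have pc := pr_uniq cA.
have pcu : perm_eq (map conjc u) u.
  have ca : conjc a = a by rewrite /a conjc_real.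
  have cb : conjc b = b by rewrite /b conjc_real.
  have e : map conjc [:: a, b & u] = [:: a, b & map conjc u].
    by transitivity [:: conjc a, conjc b & map conjc u]; [by [] | rewrite ca cb].
  have h1 : perm_eq (map conjc [:: a, b & u]) [:: a, b & u].
    apply: (@perm_trans _ (map conjc tA)); first by apply: perm_map; rewrite perm_sym.
    exact: (perm_trans pc).
  by move: h1; rewrite e !perm_cons.
have inv_u : map GRing.inv u = map conjc u.
  by apply/eq_in_map => z zu; rewrite invc_norm uu // expr1n invr1 mul1r.
have binv : b = a^-1 by rewrite /b /a fmorphV.
have pinv : perm_eq (map GRing.inv tA) tA.
  apply: (@perm_trans _ (map GRing.inv [:: a, b & u])); first exact: perm_map.
  apply: (@perm_trans _ [:: a, b & u]); last by rewrite perm_sym.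
  have e : map GRing.inv [:: a, b & u] = [:: a^-1, b^-1 & map GRing.inv u] by [].
  rewrite e inv_u binv invrK; exact: perm2.
have hz : forall z, z \in tA -> z != 0.
  move=> z; rewrite (perm_mem ptA) !inE => /orP [/eqP -> | /orP [/eqP -> | /uu h]].
  - by rewrite /a -(rmorph0 (real_complex R)) (inj_eq (@complexI R)) gt_eqF.
  - by rewrite /b -(rmorph0 (real_complex R)) (inj_eq (@complexI R)) gt_eqF.
  - by rewrite -normr_eq0 h oner_eq0.
have hrev : forall t, t != 0 -> t ^+ size tA * (pr tA).[t^-1] = (pr tA).[0] * (pr tA).[t].
  by move=> t t0; rewrite pr_rev // (pr_perm pinv) pr_at0'.
have rc := rev_coef (p := pr tA) (d := size tA) (c := (pr tA).[0]) _ hrev.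
rewrite /pr size_prod_XsubC leqnn in rc.
have recA : forall i, (i <= (size A).-1)%N -> A`_((size A).-1 - i) = A`_0 * A`_i.
  move=> i hi; apply: (@intr_inj C); rewrite intrM -!pc_coef -horner_coef0 eA.
  by rewrite -stA in hi *; exact: rc hi.
split => //.
split => //.
exact: int_pm1 hA0.1.
Qed.


End Core.

Lemma ar_e (n m : nat) : (n.-1 = 2 * (m + 1) -> n = 2 * m + 3)%N. Proof. lia. Qed.

Lemma gauss_split (P : {poly int}) : P \is monic -> (1 < size P)%N ->
  ~ irreducible_poly (map_poly (fun z : int => z%:~R) P : {poly rat}) ->
  exists A B : {poly int}, [/\ A \is monic, B \is monic, (1 < size A)%N, (1 < size B)%N & P = A * B].
Proof.
move=> mP sP nirr.
set Pq := map_poly _ P in nirr.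
have sPq : size Pq = size P by rewrite size_map_inj_poly //; exact: intr_inj.
have [q [hq1 hqd hqe]] : exists q : {poly rat}, [/\ size q != 1%N, q %| Pq & ~~ (q %= Pq)].
  apply: boolp.contrapT => hn; apply: nirr; split; first by rewrite sPq.
  move=> q h1 h2; apply/negPn/negP => h3; apply: hn; by exists q.
have [p1 [c c0 eq] [r eP]] := dvdpP_rat_int hqd.
have P0 : P != 0 by apply: monic_neq0.
have p10 : p1 != 0 by apply: contraNneq P0 => e; rewrite eP e mul0r.
have r0 : r != 0 by apply: contraNneq P0 => e; rewrite eP e mulr0.
have sp1 : size p1 = size q.
  by rewrite eq size_scale // size_map_inj_poly //; exact: intr_inj.
have sp1' : (1 < size p1)%N.
  by move: hq1 (size_poly_gt0 p1); rewrite p10 sp1; case: (size q) => [|[|n]].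
have sr : (1 < size r)%N.
  case: (ltnP 1 (size r)) => // hr.
  have : size r = 1%N by move: hr (size_poly_gt0 r); rewrite r0; case: (size r) => [|[|n]].
  move=> hr1; exfalso; move/negP: hqe; apply.
  rewrite -dvdp_size_eqp // sPq eP size_mul // hr1 addn1 /= sp1 //.
have hl : lead_coef p1 * lead_coef r = 1 by rewrite -lead_coefM -eP (eqP mP).
have hl1 : `|lead_coef p1| = 1.
  by apply: (int_abs1 (y := lead_coef r)); rewrite -normrM hl normr1.
case: (int_pm1 hl1) => e1.
  exists p1, r; split => //; first by rewrite monicE e1.
  by rewrite monicE; move: hl; rewrite e1 mul1r => ->.
exists (- p1), (- r); split; rewrite ?size_polyN ?mulrNN //.
  by rewrite monicE lead_coefN e1 opprK.
by rewrite monicE lead_coefN; move: hl; rewrite e1 mulN1r => ->.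
Qed.

Lemma key (R : realType) m (H : R) (P : {poly int}) : in_PRm m H P -> exists Q G, Props m H P Q G.
Proof.
case=> [[mP sP _ [s [alpha [eps cnt ain bin hal]]]] nirr].
move/andP: hal => [ha haH].
have sP' : size P = (2 * m + 3)%N by exact: (ar_e sP).
have sP1 : (1 < size P)%N by rewrite sP' !addnS.
have [A [B [mA mB sA sB eP]]] := gauss_split mP sP1 nirr.
have hAB : polyC_of R A * polyC_of R B = pr s by rewrite -pc_mul -eP eps.
have [tA [tB [ps eA eB]]] := split_roots (pc_monic R mA) (pc_monic R mB) hAB.
have : alpha%:C \in tA ++ tB by rewrite (perm_mem ps).
rewrite mem_cat => /orP [aA | aB].
  by exists A, B; exact: (core eP mA mB sA sB sP' eA eB ps cnt aA bin ha haH).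
exists B, A; apply: (core (tA := tB) (tB := tA) (s := s) _ mB mA sB sA sP' eB eA _ cnt aB bin ha haH).
  by rewrite mulrC.
by rewrite perm_catC.
Qed.

Unset Implicit Arguments.
Close Scope complex_scope.

Theorem lemma4 (R : realType) (m : nat) (hm : (1 <= m)%N) :
  exists C2 : R, 0 < C2 /\
    forall (H : R), 1 < H ->
      forall s : seq {poly int}, uniq s -> (forall P, P \in s -> in_PRm m H P) ->
        (size s)%:R <= C2 * H ^+ m.
Proof.
have [C2 [C20 hC]] := count_thm R m.
exists C2; split => // H H1 s us hs; apply: hC => // P /hs; exact: key.
Qed.
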